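(* Let $g$ be a Riemannian metric, $\widehat\nabla$ its Levi-Civita connection, $\nabla$ a metric-compatible linear connection ($\nabla g=0$), and $S$ defined by $\widehat\nabla=\nabla+S$. Then $(\omega,\nabla)$ is Poisson-compatible if and only if $$(\widehat\nabla_k\omega)^{ij}+\omega^{ir}S^j{}_{rk}-\omega^{jr}S^i{}_{rk}=0\quad\text{for all }i,j,k,$$ or equivalently $$\omega^{jm}S^i{}_{mk}=\tfrac12\Big((\widehat\nabla_k\omega)^{ij}-(\widehat\nabla_r\omega)^{mj}g^{ri}g_{mk}+(\widehat\nabla_r\omega)^{im}g^{rj}g_{mk}\Big).$$
   Context: Coordinates $x^i$, summation convention. $\nabla_jdx^i=-\Gamma^i_{jk}dx^k$ and $\widehat\nabla_jdx^i=-\widehat\Gamma^i_{jk}dx^k$; $S(\xi)=\xi_pS^p{}_{nm}dx^n\otimes dx^m$ so $\widehat\Gamma^a_{bc}=\Gamma^a_{bc}-S^a{}_{bc}$. $\omega$ antisymmetric bivector; $(\omega,\nabla)$ Poisson-compatible means $d(\omega^{ij})-\omega^{kj}\nabla_k(dx^i)-\omega^{ik}\nabla_k(dx^j)=0$ for all $i,j$. *)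

(* Defs.v *)
(* Local-coordinate (chart) formulation on an open set
   U of R^n; tensor fields are given by their component functions. *)
From HB Require Import structures.
From mathcomp Require Import all_boot all_order all_algebra.
From mathcomp Require Import all_classical all_reals all_analysis.
Set Implicit Arguments. Unset Strict Implicit. Unset Printing Implicit Defensive.
Import Order.TTheory GRing.Theory Num.Theory.
Import numFieldNormedType.Exports.
Local Open Scope classical_set_scope.
Local Open Scope ring_scope.

Section Defs.
Variables (R : realType) (n : nat).
Local Notation V := 'rV[R]_n.

Definition partial (k : 'I_n) (f : V -> R) : V -> R :=
  fun x => 'D_(delta_mx 0 k) f x.

Fixpoint iter_partial (l : seq 'I_n) (f : V -> R) : V -> R :=
  if l is k :: l' then partial k (iter_partial l' f) else f.

Definition smooth_on (U : set V) (f : V -> R) : Prop :=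
  forall l : seq 'I_n, forall x, U x -> differentiable (iter_partial l f) x.

Definition gmat (g : 'I_n -> 'I_n -> V -> R) (x : V) : 'M[R]_n :=
  \matrix_(i, j) g i j x.
Definition ginv (g : 'I_n -> 'I_n -> V -> R) (x : V) : 'M[R]_n :=
  invmx (gmat g x).

Definition riemannian_metric (U : set V) (g : 'I_n -> 'I_n -> V -> R) : Prop :=
  (forall i j, smooth_on U (g i j)) /\
  (forall x, U x -> forall i j, g i j x = g j i x) /\
  (forall x, U x -> forall v : 'rV[R]_n, v != 0 ->
      0 < \sum_(i < n) \sum_(j < n) v 0 i * v 0 j * g i j x).

(* A linear connection with Christoffel symbols Gm a b c = Gamma^a_{bc},
   i.e. nabla_b (dx^a) = - Gamma^a_{bc} dx^c, nabla_b d_c = Gamma^a_{bc} d_a *)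
Definition connection_on (U : set V) (Gm : 'I_n -> 'I_n -> 'I_n -> V -> R) : Prop :=
  forall a b c, smooth_on U (Gm a b c).

Definition metric_compatible (U : set V) (g : 'I_n -> 'I_n -> V -> R)
  (Gm : 'I_n -> 'I_n -> 'I_n -> V -> R) : Prop :=
  forall x, U x -> forall k i j,
    partial k (g i j) x - \sum_(m < n) Gm m k i x * g m j x
                        - \sum_(m < n) Gm m k j x * g i m x = 0.

Definition torsion_free (U : set V) (Gm : 'I_n -> 'I_n -> 'I_n -> V -> R) : Prop :=
  forall x, U x -> forall a b c, Gm a b c x = Gm a c b x.

Definition levi_civita (U : set V) (g : 'I_n -> 'I_n -> V -> R)
  (Gh : 'I_n -> 'I_n -> 'I_n -> V -> R) : Prop :=
  connection_on U Gh /\ torsion_free U Gh /\ metric_compatible U g Gh.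

Definition bivector (U : set V) (w : 'I_n -> 'I_n -> V -> R) : Prop :=
  (forall i j, smooth_on U (w i j)) /\
  (forall x, U x -> forall i j, w i j x = - w j i x).

Definition cov_bivec (Gm : 'I_n -> 'I_n -> 'I_n -> V -> R)
  (w : 'I_n -> 'I_n -> V -> R) (k i j : 'I_n) (x : V) : R :=
  partial k (w i j) x +
  \sum_(r < n) (Gm i k r x * w r j x + Gm j k r x * w i r x).

(* (omega, nabla) Poisson-compatible:
   d(w^{ij}) - w^{kj} nabla_k(dx^i) - w^{ik} nabla_k(dx^j) = 0, written in
   components along dx^m, using nabla_k dx^i = - Gamma^i_{km} dx^m. *)
Definition poisson_compatible (U : set V) (w : 'I_n -> 'I_n -> V -> R)
  (Gm : 'I_n -> 'I_n -> 'I_n -> V -> R) : Prop :=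
  forall x, U x -> forall i j m,
    partial m (w i j) x
    + \sum_(k < n) (w k j x * Gm i k m x + w i k x * Gm j k m x) = 0.

(* S defined by hat-nabla = nabla + S, i.e. hat-Gamma^a_{bc} = Gamma^a_{bc} - S^a_{bc} *)
Definition Sdiff (Gm Gh : 'I_n -> 'I_n -> 'I_n -> V -> R) (a b c : 'I_n) (x : V) : R :=
  Gm a b c x - Gh a b c x.

End Defs.

(* Main.v *)
Require Import Defs.
From HB Require Import structures.
From mathcomp Require Import all_boot all_order all_algebra.
From mathcomp Require Import all_classical all_reals all_analysis.
Import Order.TTheory GRing.Theory Num.Theory.
Import numFieldNormedType.Exports.
Local Open Scope classical_set_scope.
Local Open Scope ring_scope.
From mathcomp Require Import ring lra.
Section Alg.
Variables (R : realFieldType) (n : nat).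
Variables (G H : 'I_n -> 'I_n -> R) (s : 'I_n -> 'I_n -> 'I_n -> R)
  (w : 'I_n -> 'I_n -> R) (A : 'I_n -> 'I_n -> 'I_n -> R).
Hypothesis Gsym : forall i j, G i j = G j i.
Hypothesis Hsym : forall i j, H i j = H j i.
Hypothesis HG : forall i j, \sum_m H i m * G m j = (i == j)%:R.
Hypothesis GH : forall i j, \sum_m G i m * H m j = (i == j)%:R.
Hypothesis Comp : forall k i j,
  \sum_m s m k i * G m j + \sum_m s m k j * G i m = 0.

Definition T i j k := \sum_m w j m * s i m k.

Lemma sum_delta (f : 'I_n -> R) i : \sum_m (i == m)%:R * f m = f i.
Proof.
rewrite (bigD1 i) //= eqxx mul1r big1 ?addr0 // => m /negbTE.
by rewrite eq_sym => ->; rewrite mul0r.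
Qed.

Lemma collapseHG (f : 'I_n -> R) i :
  \sum_r H i r * \sum_m G r m * f m = f i.
Proof.
rewrite -(sum_delta f i).
under eq_bigr do rewrite mulr_sumr.
rewrite exchange_big /=; apply: eq_bigr => m _.
by rewrite -HG mulr_suml; apply: eq_bigr => r _; rewrite mulrA.
Qed.

Lemma collapseGH (f : 'I_n -> R) i :
  \sum_r G i r * \sum_m H r m * f m = f i.
Proof.
rewrite -(sum_delta f i).
under eq_bigr do rewrite mulr_sumr.
rewrite exchange_big /=; apply: eq_bigr => m _.
by rewrite -GH mulr_suml; apply: eq_bigr => r _; rewrite mulrA.
Qed.

Lemma X1 i j k :
  \sum_r \sum_m T m j r * H r i * G m k = - T i j k.
Proof.
have step r : \sum_m T m j r * G m k = - \sum_m G r m * T m j k.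
  rewrite /T.
  under eq_bigr do rewrite mulr_suml.
  rewrite exchange_big /=.
  have C p : \sum_m s m p r * G m k = - \sum_m s m p k * G r m.
    by apply/eqP; rewrite -addr_eq0; apply/eqP; apply: Comp.
  transitivity (\sum_p w j p * \sum_m s m p r * G m k).
    by apply: eq_bigr => p _; rewrite mulr_sumr; apply: eq_bigr => m _; ring.
  rewrite (eq_bigr (fun p => - (w j p * \sum_m s m p k * G r m))); last first.
    by move=> p _; rewrite C mulrN.
  rewrite sumrN; congr (- _).
  under [RHS]eq_bigr do rewrite mulr_sumr.
  rewrite [RHS]exchange_big /=; apply: eq_bigr => p _.
  rewrite mulr_sumr; apply: eq_bigr => m _; ring.
transitivity (\sum_r H i r * \sum_m T m j r * G m k).
  apply: eq_bigr => r _; rewrite mulr_sumr; apply: eq_bigr => m _.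
  rewrite Hsym; ring.
under eq_bigr do rewrite step mulrN.
by rewrite sumrN collapseHG.
Qed.

Lemma X2Y1 i j k :
  \sum_r \sum_m T j m r * H r i * G m k
  + \sum_r \sum_m T i m r * H r j * G m k = 0.
Proof.
pose u p := \sum_m w m p * G m k.
pose Z a b p := \sum_r s a p r * H r b.
have E a b : \sum_r \sum_m T a m r * H r b * G m k = \sum_p u p * Z a b p.
  rewrite /T /u /Z.
  transitivity (\sum_r \sum_m \sum_p w m p * G m k * (s a p r * H r b)).
    apply: eq_bigr => r _; apply: eq_bigr => m _.
    rewrite !mulr_suml; apply: eq_bigr => p _; ring.
  under eq_bigr do rewrite exchange_big /=.
  rewrite exchange_big /=; apply: eq_bigr => p _.
  rewrite big_distrlr exchange_big /=; apply: eq_bigr => r _.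
  by apply: eq_bigr.
rewrite !E -big_split /=; apply: big1 => p _; rewrite -mulrDr.
suff -> : Z j i p + Z i j p = 0 by rewrite mulr0.
pose N c r := \sum_m G c m * s m p r.
have Ns c r : N c r + N r c = 0.
  rewrite /N -[RHS](Comp p r c); congr (_ + _); apply: eq_bigr => m _.
    by rewrite mulrC Gsym.
  by rewrite mulrC.
have Zs a b : Z a b p = \sum_r \sum_c H a c * N c r * H r b.
  rewrite /Z; apply: eq_bigr => r _; rewrite -mulr_suml; congr (_ * _).
  by rewrite /N collapseHG.
rewrite !Zs.
have -> : \sum_r \sum_c H i c * N c r * H r j
        = \sum_r \sum_c H j c * N r c * H r i.
  rewrite exchange_big /=; apply: eq_bigr => r _; apply: eq_bigr => c _.
  rewrite (Hsym i r) (Hsym c j); ring.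
rewrite -big_split /=; apply: big1 => r _; rewrite -big_split /=.
apply: big1 => c _.
have -> : H j c * N c r * H r i + H j c * N r c * H r i
        = H j c * (N c r + N r c) * H r i by ring.
by rewrite Ns mulr0 mul0r.
Qed.

Hypothesis wanti : forall i j, w i j = - w j i.
Hypothesis Aanti : forall k i j, A k i j = - A k j i.

Lemma alg_equiv :
  (forall i j k, A k i j + T j i k - T i j k = 0) <->
  (forall i j k, T i j k = 2^-1 * (A k i j
          - \sum_r \sum_m A r m j * H r i * G m k
          + \sum_r \sum_m A r i m * H r j * G m k)).
Proof.
split.
- move=> E0.
  have E k i j : A k i j = T i j k - T j i k.
    by apply/eqP; rewrite -subr_eq0; apply/eqP; rewrite -(E0 i j k); ring.
  move=> i j k.
  have P1 : \sum_r \sum_m A r m j * H r i * G m k =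
    \sum_r \sum_m T m j r * H r i * G m k - \sum_r \sum_m T j m r * H r i * G m k.
    rewrite -sumrB; apply: eq_bigr => r _; rewrite -sumrB; apply: eq_bigr => m _.
    rewrite E; ring.
  have P2 : \sum_r \sum_m A r i m * H r j * G m k =
    \sum_r \sum_m T i m r * H r j * G m k - \sum_r \sum_m T m i r * H r j * G m k.
    rewrite -sumrB; apply: eq_bigr => r _; rewrite -sumrB; apply: eq_bigr => m _.
    rewrite E; ring.
  rewrite P1 P2 !X1 E.
  have := X2Y1 i j k.
  set a := \sum_r _; set b := \sum_r _ => hab.
  have -> : T i j k - T j i k - (- T i j k - a) + (b - - T j i k)
          = 2 * T i j k + (a + b) by ring.
  rewrite hab addr0 mulrA mulVf ?mul1r //.
- move=> F i j k.
  rewrite (F i j k) (F j i k).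
  have Q1 : \sum_r \sum_m A r i m * H r j * G m k
          = - \sum_r \sum_m A r m i * H r j * G m k.
    rewrite -sumrN; apply: eq_bigr => r _; rewrite -sumrN; apply: eq_bigr => m _.
    rewrite Aanti; ring.
  have Q2 : \sum_r \sum_m A r j m * H r i * G m k
          = - \sum_r \sum_m A r m j * H r i * G m k.
    rewrite -sumrN; apply: eq_bigr => r _; rewrite -sumrN; apply: eq_bigr => m _.
    rewrite Aanti; ring.
  rewrite Q1 Q2 (Aanti k j i).
  have h2 : (2 : R)^-1 * 2 = 1 by rewrite mulVf //; apply/eqP; lra.
  set a := \sum_r _; set b := \sum_r _.
  transitivity (A k i j * (1 - 2^-1 * 2)); last by rewrite h2 subrr mulr0.
  ring.
Qed.
End Alg.

Lemma partial_antisym (R : realType) (n : nat) (U : set 'rV[R]_n)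
  (f h : 'rV[R]_n -> R) k x : open U -> U x ->
  (forall y, U y -> f y = - h y) -> differentiable h x ->
  partial k f x = - partial k h x.
Proof.
move=> oU Ux fh dh; rewrite /partial.
rewrite (@near_eq_derive _ _ _ f (- h)).
  by rewrite deriveN //; exact: diff_derivable.
have : \forall y \near x, U y by apply: open_nbhs_nbhs.
by apply: filterS => y /fh.
Qed.

Lemma gmat_unit (R : realType) (n : nat) (U : set 'rV[R]_n) g x :
  riemannian_metric U g -> U x -> gmat g x \in unitmx.
Proof.
move=> [_ [_ pd]] Ux.
rewrite unitmxE unitfE; apply/negP => /det0P [v v0 vG].
have := pd x Ux v v0.
suff -> : \sum_(i < n) \sum_(j < n) v 0 i * v 0 j * g i j x = 0 by rewrite ltxx.
rewrite exchange_big /=; apply: big1 => j _.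
have : (v *m gmat g x) 0 j = 0 by rewrite vG mxE.
rewrite mxE => e.
transitivity (v 0 j * \sum_i v 0 i * gmat g x i j); last by rewrite e mulr0.
rewrite mulr_sumr; apply: eq_bigr => i _.
by rewrite mxE; ring.
Qed.

Theorem proposition5p5 (R : realType) (n : nat) (U : set 'rV[R]_n)
  (g : 'I_n -> 'I_n -> 'rV[R]_n -> R)
  (Gh Gm : 'I_n -> 'I_n -> 'I_n -> 'rV[R]_n -> R)
  (w : 'I_n -> 'I_n -> 'rV[R]_n -> R) :
  open U ->
  riemannian_metric U g ->
  levi_civita U g Gh ->
  connection_on U Gm ->
  metric_compatible U g Gm ->
  bivector U w ->
  (poisson_compatible U w Gm <->
     (forall x, U x -> forall i j k,
        cov_bivec Gh w k i j x
        + \sum_(r < n) w i r x * Sdiff Gm Gh j r k x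
        - \sum_(r < n) w j r x * Sdiff Gm Gh i r k x = 0)) /\
  (poisson_compatible U w Gm <->
     (forall x, U x -> forall i j k,
        \sum_(m < n) w j m x * Sdiff Gm Gh i m k x =
        2^-1 * (cov_bivec Gh w k i j x
          - \sum_(r < n) \sum_(m < n)
              cov_bivec Gh w r m j x * ginv g x r i * g m k x
          + \sum_(r < n) \sum_(m < n)
              cov_bivec Gh w r i m x * ginv g x r j * g m k x))).
Proof.
move=> oU rg [cGh [tfGh mcGh]] cGm mcGm [sw aw].
have ident : forall x, U x -> forall i j k,
  cov_bivec Gh w k i j x
        + \sum_(r < n) w i r x * Sdiff Gm Gh j r k x
        - \sum_(r < n) w j r x * Sdiff Gm Gh i r k x =
  partial k (w i j) x
    + \sum_(r < n) (w r j x * Gm i r k x + w i r x * Gm j r k x).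
  move=> x Ux i j k; rewrite /cov_bivec -!addrA; congr (_ + _).
  rewrite -sumrB -big_split /=; apply: eq_bigr => r _.
  rewrite /Sdiff (tfGh x Ux i k r) (tfGh x Ux j k r) (aw x Ux j r); ring.
have part1 : poisson_compatible U w Gm <->
     (forall x, U x -> forall i j k,
        cov_bivec Gh w k i j x
        + \sum_(r < n) w i r x * Sdiff Gm Gh j r k x
        - \sum_(r < n) w j r x * Sdiff Gm Gh i r k x = 0).
  split => H x Ux i j k.
    by rewrite ident //; apply: H.
  by rewrite -ident //; apply: H.
split => //.
have AE : forall x, U x -> _ := fun x Ux =>
  @alg_equiv R n (fun i j => g i j x) (fun i j => ginv g x i j)
    (fun a b c => Sdiff Gm Gh a b c x) (fun i j => w i j x)
    (fun k i j => cov_bivec Gh w k i j x).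
have f1 : forall x, U x -> forall i j, g i j x = g j i x.
  by move=> x Ux i j; case: rg => _ [+ _]; apply.
have f2 : forall x, U x -> forall i j, ginv g x i j = ginv g x j i.
  move=> x Ux i j; rewrite /ginv.
  have -> : invmx (gmat g x) i j = (invmx (gmat g x))^T j i by rewrite mxE.
  rewrite trmx_inv; congr (invmx _ _ _); apply/matrixP => a b.
  by rewrite !mxE; case: rg => _ [+ _]; apply.
have f3 : forall x, U x -> forall i j,
    \sum_m ginv g x i m * g m j x = (i == j)%:R.
  move=> x Ux i j; rewrite /ginv.
  have := mulVmx (@gmat_unit _ _ _ _ _ rg Ux); move/matrixP => /(_ i j).
  rewrite !mxE => <-; apply: eq_bigr => m _; by rewrite mxE.
have f4 : forall x, U x -> forall i j,
    \sum_m g i m x * ginv g x m j = (i == j)%:R.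
  move=> x Ux i j.
  have := mulmxV (@gmat_unit _ _ _ _ _ rg Ux); move/matrixP => /(_ i j).
  rewrite !mxE => <-; apply: eq_bigr => m _; by rewrite mxE.
have f5 : forall x, U x -> forall k i j,
    \sum_m Sdiff Gm Gh m k i x * g m j x
    + \sum_m Sdiff Gm Gh m k j x * g i m x = 0.
  move=> x Ux k i j; rewrite /Sdiff.
  have h1 := mcGm x Ux k i j; have h2 := mcGh x Ux k i j.
  under eq_bigr do rewrite mulrBl.
  under [X in _ + X]eq_bigr do rewrite mulrBl.
  rewrite !sumrB; lra.
have f7 : forall x, U x -> forall k i j,
    cov_bivec Gh w k i j x = - cov_bivec Gh w k j i x.
  move=> x Ux k i j; rewrite /cov_bivec.
  rewrite (@partial_antisym _ _ _ _ _ k x oU Ux (fun y Uy => aw y Uy i j));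
    last exact: (sw j i [::] x Ux).
  rewrite opprD -sumrN; congr (_ + _); apply: eq_bigr => r _.
  rewrite (aw x Ux r j) (aw x Ux i r); ring.
have AE2 := fun x Ux => AE x Ux (f1 x Ux) (f2 x Ux) (f3 x Ux)
   (f5 x Ux) (f7 x Ux).
rewrite part1; split => Hc x Ux; [apply: (AE2 x Ux).1 | apply: (AE2 x Ux).2];
  exact: Hc.
Qed.
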